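(* Let $k\geq 1$ and let $x_1,\ldots,x_k$ be an arrangement of $1,\ldots,k$. Let $p$ be the POP of length $k$ defined by the relations $x_1>x_j$ for all $2\leq j\leq k$ (and no other relations), and let $a(n)=|S_n(p)|$. Then $a(n)=n!$ for $n<k$ and $a(n)=(k-1)!\,(k-1)^{n-k+1}$ for $n\geq k$. Equivalently, $$\sum_{n\geq 0}a(n)x^n=\frac{(k-1)(k-1)!\,x^k}{1-(k-1)x}+\sum_{i=0}^{k-1}i!\,x^i.$$
   Context: An $n$-permutation is a word $\pi=\pi_1\cdots\pi_n$ containing each of $1,\ldots,n$ exactly once; $S_n$ is the set of $n$-permutations ($S_0$ consists of the empty permutation). A partially ordered pattern (POP) $p$ of length $k$ is a partial order on the label set $\{1,\ldots,k\}$; it is described by a set of generating relations, where a relation $x>y$ means that in an occurrence the entry in the $x$-th chosen position must be larger than the entry in the $y$-th chosen position, and labels not involved in any relation are unconstrained. An $n$-permutation $\pi$ contains $p$ if there are indices $1\leq i_1<\cdots<i_k\leq n$ such that $\pi_{i_x}>\pi_{i_y}$ whenever $x>y$ in the partial order; otherwise $\pi$ avoids $p$. $S_n(p)$ denotes the set of $n$-permutations avoiding $p$. *)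

(* Defs.v *)
From mathcomp Require Import all_boot all_order all_fingroup.
Set Implicit Arguments. Unset Strict Implicit. Unset Printing Implicit Defensive.

(* An n-permutation is an element of 'S_n; entries are 0..n-1 (order-isomorphic
   to 1..n).  A POP of length k is given by its set of generating relations
   p : rel 'I_k, where p a b means "label a > label b" (labels 0..k-1). *)

Definition pop (k : nat) := rel 'I_k.

Definition pop_contains (n k : nat) (pi : 'S_n) (p : pop k) : bool :=
  [exists f : {ffun 'I_k -> 'I_n},
    [forall a : 'I_k, forall b : 'I_k, (a < b) ==> (f a < f b)] &&
    [forall a : 'I_k, forall b : 'I_k, p a b ==> (pi (f b) < pi (f a))]].

Definition pop_avoids (n k : nat) (pi : 'S_n) (p : pop k) : bool :=
  ~~ pop_contains pi p.

(* The POP whose generating relations are x_1 > x_j for all 2 <= j <= k,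
   where x is an arrangement of the labels (x_1 is x applied to the first index). *)
Definition max_first_pop (k : nat) (x : 'S_k) (x1 : 'I_k) : pop k :=
  fun a b => (a == x x1) && [exists j : 'I_k, (j != x1) && (b == x j)].

(* Main.v *)
Require Import Defs.
From mathcomp Require Import all_boot all_order all_fingroup.
From mathcomp Require Import zify.
Set Implicit Arguments. Unset Strict Implicit. Unset Printing Implicit Defensive.
Definition cnd (m K L R : nat) := (L < m) || (R < K).

Fixpoint Qrec (m K : nat) (a w : seq nat) : bool :=
  match w with
  | [::] => true
  | v :: b => cnd m K (count (fun u => u < v) a) (count (fun u => u < v) b)
              && Qrec m K (v :: a) b
  end.

Lemma Qrec_perm m K w : forall a a', perm_eq a a' -> Qrec m K a w = Qrec m K a' w.
Proof.
elim: w => //= v b IH a a' Ha.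
rewrite (IH (v :: a) (v :: a')); last by rewrite perm_cons.
by move/seq.permP: Ha => ->.
Qed.

Lemma Qrec_big m K n t : all (fun u => u < n) t ->
  forall a, Qrec m K (n :: a) t = Qrec m K a t.
Proof.
elim: t => //= v b IH /andP[vn bn] a.
have -> : (n < v) = false by apply/negbTE; rewrite -leqNgt ltnW.
rewrite add0n (@Qrec_perm _ _ _ (v :: n :: a) (n :: v :: a)); first by rewrite IH.
by rewrite (perm_catCA [:: v] [:: n] a).
Qed.

Lemma Qrec_ins m K n u t : all (fun u => u < n) u -> all (fun u => u < n) t ->
  forall a, all (fun u => u < n) a ->
  Qrec m K a (u ++ n :: t) = Qrec m K a (u ++ t) && cnd m K (size a + size u) (size t).
Proof.
move=> Hu Ht; elim: u Hu => [|v u IH] /= Hu a Ha.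
  rewrite Qrec_big // andbC addn0. congr (_ && _).
  by move: Ha Ht; rewrite !all_count => /eqP -> /eqP ->.
move/andP: Hu => [vn Hu].
rewrite IH //=; last by rewrite vn Ha.
rewrite count_cat /= count_cat.
have -> : (n < v) = false by apply/negbTE; rewrite -leqNgt ltnW.
by rewrite add0n andbA addSnnS.
Qed.
Definition ins (n : nat) (w : seq nat) (c : nat) := take c w ++ n :: drop c w.

Definition perms_step n (s : seq (seq nat)) :=
  [seq ins n w c | w <- s, c <- iota 0 n.+1].
Fixpoint perms (n : nat) : seq (seq nat) :=
  if n is n'.+1 then perms_step n' (perms n') else [:: [::]].

Lemma iotaSr n : perm_eq (iota 0 n.+1) (n :: iota 0 n).
Proof.
by rewrite -addn1 iotaD add0n perm_catC.
Qed.

Lemma ins_perm n w c : perm_eq (ins n w c) (n :: w).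
Proof.
rewrite /ins -[X in perm_eq _ (_ :: X)](cat_take_drop c w).
by rewrite (perm_catCA (take c w) [:: n]).
Qed.

Lemma perms_mem n w : (w \in perms n) = perm_eq w (iota 0 n).
Proof.
elim: n w => [|n IH] w.
  rewrite /= inE; apply/eqP/idP => [->//|]; by move/perm_size; case: w.
apply/allpairsP/idP.
  case=> [[w' c]] /= [Hw Hc ->]; rewrite IH in Hw.
  apply: perm_trans (ins_perm _ _ _) _.
  rewrite perm_sym; apply: perm_trans (iotaSr n) _; by rewrite perm_cons perm_sym.
move=> Hw.
have nw : n \in w by rewrite (perm_mem Hw) mem_iota add0n ltnSn.
have Ew : take (index n w) w ++ n :: drop (index n w).+1 w = w.
  apply/esym; by rewrite -{1}(cat_take_drop (index n w) w) (drop_nth n) ?index_mem // nth_index.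
set c := index n w.
exists (take c w ++ drop c.+1 w, c) => /=; split.
- rewrite IH -(perm_cons n) perm_sym.
  apply: (@perm_trans _ (iota 0 n.+1)); first by rewrite perm_sym iotaSr.
  rewrite perm_sym; apply: (@perm_trans _ w) => //.
  by rewrite -(perm_catCA (take c w) [:: n]) /= Ew.
- by rewrite -[0 :: _]/(iota 0 n.+1) mem_iota add0n -[n.+1](size_iota 0) -(perm_size Hw) index_mem.
- rewrite /ins take_cat size_take index_mem nw ltnn subnn take0 cats0.
  rewrite drop_cat size_take index_mem nw ltnn subnn drop0.
  by rewrite Ew.
Qed.

Lemma perms_uniq n : uniq (perms n).
Proof.
elim: n => [|n IH] //.
apply: allpairs_uniq => //; first exact: iota_uniq.
move=> [w1 c1] [w2 c2] M1 M2.
have M1' : (w1,c1) \in [seq (x, y) | x <- perms n, y <- iota 0 n.+1] := M1.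
have M2' : (w2,c2) \in [seq (x, y) | x <- perms n, y <- iota 0 n.+1] := M2.
have/allpairsP [[w1' c1'] /= [H1 Hc1 [E1 E2]]] := M1'.
have/allpairsP [[w2' c2'] /= [H2 Hc2 [E3 E4]]] := M2'.
subst w1' c1' w2' c2'.
rewrite perms_mem in H1; rewrite perms_mem in H2.
have n1 : n \notin w1 by rewrite (perm_mem H1) mem_iota ltnn andbF.
have n2 : n \notin w2 by rewrite (perm_mem H2) mem_iota ltnn andbF.
have {}Hc1 : c1 < n.+1.
  by move: Hc1; rewrite -[0 :: _]/(iota 0 n.+1) mem_iota.
have {}Hc2 : c2 < n.+1.
  by move: Hc2; rewrite -[0 :: _]/(iota 0 n.+1) mem_iota.
have s1 : c1 <= size w1 by rewrite (perm_size H1) size_iota -ltnS.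
have s2 : c2 <= size w2 by rewrite (perm_size H2) size_iota -ltnS.
rewrite /ins => E.
have t1 : size (take c1 w1) = c1 by rewrite size_takel.
have t2 : size (take c2 w2) = c2 by rewrite size_takel.
have Ec : c1 = c2.
  have := congr1 (index n) E.
  rewrite !index_cat /= eqxx !addn0 t1 t2.
  rewrite (negbTE (contra (@mem_take _ _ _ _) n1)).
  by rewrite (negbTE (contra (@mem_take _ _ _ _) n2)).
subst c2; congr pair.
move/eqP: E; rewrite eqseq_cat ?t1 ?t2 // => /andP[/eqP Et /eqP [Ed]].
by rewrite -(cat_take_drop c1 w1) -(cat_take_drop c1 w2) Et Ed.
Qed.

Lemma count_allowed m K n :
  count (fun c => cnd m K c (n - c)) (iota 0 n.+1) = if n < m + K then n.+1 else m + K.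
Proof.
case: ifP => Hn.
  rewrite -[in RHS](size_iota 0 n.+1); apply/eqP; rewrite -all_count.
  apply/allP => c; rewrite mem_iota /cnd => /andP[_ Hc].
  apply/orP; case: (ltnP c m) => Hcm; [by left | right]; lia.
have e : n.+1 = m + (n.+1 - m - K) + K by lia.
rewrite e !iotaD !count_cat add0n.
have -> : count (fun c => cnd m K c (n - c)) (iota 0 m) = m.
  rewrite -[in RHS](size_iota 0 m); apply/eqP; rewrite -all_count.
  by apply/allP => c; rewrite mem_iota /cnd => /andP[_ ->].
have -> : count (fun c => cnd m K c (n - c)) (iota m (n.+1 - m - K)) = 0.
  apply/eqP; rewrite -leqn0 leqNgt -has_count; apply/hasPn => c.
  rewrite mem_iota /cnd => /andP[H1 H2]; apply/negP => /orP[]; lia.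
have -> : count (fun c => cnd m K c (n - c)) (iota (m + (n.+1 - m - K)) K) = K.
  rewrite -[in RHS](size_iota (m + (n.+1 - m - K)) K); apply/eqP; rewrite -all_count.
  apply/allP => c; rewrite mem_iota /cnd => /andP[H1 H2]; apply/orP; right; lia.
by rewrite addn0.
Qed.

Lemma perms_lt n w : w \in perms n -> all (fun u => u < n) w.
Proof.
rewrite perms_mem => H; apply/allP => u; rewrite (perm_mem H) mem_iota; lia.
Qed.

Lemma Q_ins m K n w c : w \in perms n -> c <= n ->
  Qrec m K [::] (ins n w c) = Qrec m K [::] w && cnd m K c (n - c).
Proof.
move=> Hw Hc; have Hl := perms_lt Hw.
have Hs : size w = n by rewrite (perm_size (etrans (esym (perms_mem n w)) Hw)) size_iota.
rewrite /ins Qrec_ins //.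
- by rewrite cat_take_drop /= size_takel ?Hs // size_drop Hs.
- by apply/allP => u /mem_take; exact: (allP Hl u).
- by apply/allP => u /mem_drop; exact: (allP Hl u).
Qed.

Lemma count_step m K n s : {subset s <= perms n} ->
  count (Qrec m K [::]) (perms_step n s) =
  count (fun c => cnd m K c (n - c)) (iota 0 n.+1) * count (Qrec m K [::]) s.
Proof.
elim: s => [|w s IH] Hs; first by rewrite muln0.
rewrite /perms_step allpairs_cons count_cat -/(perms_step n s) IH; last first.
  by move=> u Hu; apply: Hs; rewrite inE Hu orbT.
rewrite mulnDr; congr (_ + _).
have Hw : w \in perms n by apply: Hs; rewrite inE eqxx.
rewrite count_map.
rewrite (@eq_in_count _ _ (fun c => Qrec m K [::] w && cnd m K c (n - c))); last first.
  move=> c; rewrite mem_iota => /andP[_ Hc] /=; by rewrite Q_ins.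
case: (Qrec m K [::] w) => /=; first by rewrite muln1.
by rewrite muln0 count_pred0.
Qed.
Lemma count_formula k m n : 0 < k -> m < k ->
  count (Qrec m (k.-1 - m) [::]) (perms n) =
  (if n < k then n`! else (k.-1)`! * (k.-1) ^ (n - k + 1)).
Proof.
move=> hk hm; elim: n => [|n IH]; first by rewrite hk.
rewrite [perms _]/= count_step // count_allowed IH.
have -> : m + (k.-1 - m) = k.-1 by lia.
case: (ltnP n.+1 k) => H1.
  have -> : n < k by lia.
  have -> : n < k.-1 by lia.
  by rewrite factS.
case: (ltnP n k) => H2.
  have -> : n < k.-1 = false by lia.
  have -> : k.-1 = n by lia.
  have -> : n.+1 - k + 1 = 1 by lia.
  by rewrite expn1 mulnC.
have -> : n < k.-1 = false by lia.
have -> : n.+1 - k + 1 = (n - k + 1).+1 by lia.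
by rewrite expnS mulnCA.
Qed.

Definition word n (pi : 'S_n) : seq nat := [seq val (pi i) | i <- enum 'I_n].

Lemma word_perms n (pi : 'S_n) : word pi \in perms n.
Proof.
rewrite perms_mem /word -val_enum_ord.
have -> : [seq val (pi i) | i <- enum 'I_n] = map val (map pi (enum 'I_n)).
  by elim: (enum 'I_n) => //= a l ->.
apply: perm_map; apply: uniq_perm.
- by rewrite map_inj_uniq ?enum_uniq //; apply: perm_inj.
- exact: enum_uniq.
move=> i; rewrite mem_enum; apply/mapP; exists (pi^-1 i)%g; first by rewrite mem_enum.
by rewrite permKV.
Qed.

Lemma nth_word n (pi : 'S_n) (i : 'I_n) : nth 0 (word pi) i = val (pi i).
Proof.
by rewrite /word (nth_map i) ?size_enum_ord // nth_ord_enum.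
Qed.

Lemma word_inj n : injective (@word n).
Proof.
move=> p1 p2 E; apply/permP => i; apply: val_inj.
by rewrite -!nth_word E.
Qed.

Lemma perms_word n w : w \in perms n -> exists pi : 'S_n, word pi = w.
Proof.
rewrite perms_mem => Hw.
have Hs : size w = n by rewrite (perm_size Hw) size_iota.
have Hu : uniq w by rewrite (perm_uniq Hw) iota_uniq.
have Hl : forall i : 'I_n, nth 0 w i < n.
  move=> i; have : nth 0 w i \in w by rewrite mem_nth // Hs.
  by rewrite (perm_mem Hw) mem_iota.
pose g := fun i : 'I_n => Ordinal (Hl i).
have gi : injective g.
  move=> i j /(congr1 val) /= /eqP; rewrite nth_uniq ?Hs // => /eqP; apply: val_inj.
exists (perm gi); apply: (@eq_from_nth _ 0); first by rewrite size_map size_enum_ord Hs.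
rewrite size_map size_enum_ord => i Hi.
by rewrite -[i]/(val (Ordinal Hi)) nth_word permE.
Qed.

Lemma card_word n (Q : pred (seq nat)) :
  #|[set pi : 'S_n | Q (word pi)]| = count Q (perms n).
Proof.
rewrite cardsE cardE /enum_mem size_filter -enumT -(count_map (@word n) Q).
apply/seq.permP; apply: uniq_perm.
- by rewrite map_inj_uniq ?enum_uniq //; apply: word_inj.
- exact: perms_uniq.
move=> w; apply/mapP/idP => [[pi _ ->]|/perms_word [pi <-]]; first exact: word_perms.
by exists pi; rewrite ?mem_enum.
Qed.
Lemma card_count (T : finType) (P : pred T) : #|[set x | P x]| = count P (enum T).
Proof. by rewrite cardsE cardE -size_filter enumT /enum_mem. Qed.

Lemma count_take_ord n t (P : pred 'I_n) :
  count P (take t (enum 'I_n)) = count (fun j : 'I_n => (j < t) && P j) (enum 'I_n).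
Proof.
rewrite -[in RHS](cat_take_drop t (enum 'I_n)) count_cat.
rewrite [X in _ = X + _](@eq_in_count _ _ P); last first.
  move=> j Hj; have : val j \in map val (take t (enum 'I_n)) by apply: map_f.
  rewrite map_take val_enum_ord take_iota mem_iota => /andP[_ H]; rewrite /= in H.
  rewrite /=; have -> : j < t by lia. by [].
rewrite [X in _ = _ + X](@eq_in_count _ _ pred0); last first.
  move=> j Hj; have : val j \in map val (drop t (enum 'I_n)) by apply: map_f.
  rewrite map_drop val_enum_ord drop_iota mem_iota => /andP[H _]; rewrite /= in H.
  rewrite /=; have -> : j < t = false by lia. by [].
by rewrite count_pred0 addn0.
Qed.

Lemma count_drop_ord n t (P : pred 'I_n) :
  count P (drop t (enum 'I_n)) = count (fun j : 'I_n => (t <= j) && P j) (enum 'I_n).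
Proof.
rewrite -[in RHS](cat_take_drop t (enum 'I_n)) count_cat.
rewrite [X in _ = X + _](@eq_in_count _ _ pred0); last first.
  move=> j Hj; have : val j \in map val (take t (enum 'I_n)) by apply: map_f.
  rewrite map_take val_enum_ord take_iota mem_iota => /andP[_ H]; rewrite /= in H.
  rewrite /=; have -> : t <= j = false by lia. by [].
rewrite [X in _ = _ + X](@eq_in_count _ _ P); last first.
  move=> j Hj; have : val j \in map val (drop t (enum 'I_n)) by apply: map_f.
  rewrite map_drop val_enum_ord drop_iota mem_iota => /andP[H _]; rewrite /= in H.
  rewrite /=; have -> : t <= j by lia. by [].
by rewrite count_pred0.
Qed.

Definition Lset n (pi : 'S_n) (i : 'I_n) := [set j : 'I_n | (j < i) && (pi j < pi i)].
Definition Rset n (pi : 'S_n) (i : 'I_n) := [set j : 'I_n | (i < j) && (pi j < pi i)].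

Lemma Qrec_all m K w : forall a, Qrec m K a w =
  all (fun i => cnd m K (count (fun u => u < nth 0 w i) (a ++ take i w))
                        (count (fun u => u < nth 0 w i) (drop i.+1 w))) (iota 0 (size w)).
Proof.
elim: w => [|v b IH] a //=.
rewrite IH drop0 cats0; congr (_ && _).
rewrite -[1]/(1 + 0) iotaDl all_map; apply: eq_all => i; rewrite /= add1n /=.
by rewrite add0n !count_cat /= addnCA.
Qed.

Lemma Q_word m K n (pi : 'S_n) :
  Qrec m K [::] (word pi) = [forall i : 'I_n, cnd m K #|Lset pi i| #|Rset pi i|].
Proof.
rewrite Qrec_all /word size_map size_enum_ord -/(word pi).
apply/allP/forallP => [H i|H i].
  have := H i; rewrite mem_iota /= ltn_ord => /(_ isT).
  rewrite nth_word /word -map_take -map_drop !count_map.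
  rewrite count_take_ord count_drop_ord /Lset /Rset !card_count.
  by congr (cnd _ _ _ _); apply: eq_count => j /=.
rewrite mem_iota /= => Hi.
have := H (Ordinal Hi).
rewrite -[i]/(val (Ordinal Hi)) nth_word /word -map_take -map_drop !count_map.
rewrite count_take_ord count_drop_ord /Lset /Rset !card_count.
by congr (cnd _ _ _ _); apply: eq_count => j /=.
Qed.
Lemma p_eq k (x : 'S_k) (x1 : 'I_k) a b :
  max_first_pop x x1 a b = (a == x x1) && (b != x x1).
Proof.
rewrite /max_first_pop; congr (_ && _); apply/existsP/idP => [[j /andP[jn /eqP ->]]|bn].
  by rewrite (inj_eq (@perm_inj _ x)).
exists (x^-1 b)%g; rewrite permKV eqxx andbT; apply: contra bn => /eqP <-.
by rewrite permKV.
Qed.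

Lemma card_lt k (M : 'I_k) : #|[set b : 'I_k | b < M]| = M.
Proof.
rewrite card_count.
have E : (M : nat) = size (take M (enum 'I_k)) by rewrite size_takel // size_enum_ord ltnW.
rewrite [in RHS]E.
rewrite -count_predT count_take_ord; apply: eq_count => j; by rewrite andbT.
Qed.

Lemma card_gt k (M : 'I_k) : #|[set b : 'I_k | M < b]| = k.-1 - M.
Proof.
rewrite card_count.
have E : k.-1 - M = size (drop M.+1 (enum 'I_k)) by rewrite size_drop size_enum_ord; lia.
rewrite [in RHS]E.
rewrite -count_predT count_drop_ord; apply: eq_count => j; by rewrite andbT.
Qed.

Lemma contains_char k n (M : 'I_k) (p : pop k) (pi : 'S_n) :
  (forall a b, p a b = (a == M) && (b != M)) ->
  pop_contains pi p = [exists i : 'I_n, (M <= #|Lset pi i|) && (k.-1 - M <= #|Rset pi i|)].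
Proof.
move=> hp; apply/idP/idP.
  case/existsP => f /andP[/forallP Hinc /forallP Hp].
  have inc : forall a b : 'I_k, a < b -> f a < f b.
    by move=> a b ab; move/forallP: (Hinc a) => /(_ b) /implyP; apply.
  have hpp : forall b, b != M -> pi (f b) < pi (f M).
    move=> b bM; move/forallP: (Hp M) => /(_ b) /implyP; apply; by rewrite hp eqxx.
  have finj : injective f.
    move=> a b E; case: (ltngtP a b) => [/inc|/inc|/val_inj //]; by rewrite E ltnn.
  apply/existsP; exists (f M); apply/andP; split.
    rewrite -{1}(card_lt M) -(card_imset _ finj); apply: subset_leq_card.
    apply/subsetP => _ /imsetP [b Hb ->]; rewrite inE in Hb; rewrite inE inc // hpp //.
    by apply: contraTneq Hb => ->; rewrite ltnn.
  rewrite -(card_gt M) -(card_imset _ finj); apply: subset_leq_card.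
  apply/subsetP => _ /imsetP [b Hb ->]; rewrite inE in Hb; rewrite inE inc // hpp //.
  by apply: contraTneq Hb => ->; rewrite ltnn.
case/existsP => i /andP[HL HR].
set ls := [seq j : 'I_n <- enum 'I_n | (j < i) && (pi j < pi i)].
set rs := [seq j : 'I_n <- enum 'I_n | (i < j) && (pi j < pi i)].
have szl : size ls = #|Lset pi i| by rewrite /Lset card_count size_filter.
have szr : size rs = #|Rset pi i| by rewrite /Rset card_count size_filter.
have srt : sorted (relpre val ltn) (enum 'I_n).
  by have := iota_ltn_sorted 0 n; rewrite -val_enum_ord sorted_map.
have tr : transitive (relpre (@nat_of_ord n) ltn).
  by move=> y a z; exact: ltn_trans.
have sls : sorted (relpre val ltn) ls by apply: sorted_filter.
have srs : sorted (relpre val ltn) rs by apply: sorted_filter.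
have FL : forall a, a < M -> (nth i ls a < i) && (pi (nth i ls a) < pi i).
  move=> a aM; have : nth i ls a \in ls by rewrite mem_nth // szl; lia.
  by rewrite mem_filter => /andP[].
have FR : forall a : 'I_k, M < a -> (i < nth i rs (a - M.+1)) && (pi (nth i rs (a - M.+1)) < pi i).
  move=> a aM; have : nth i rs (a - M.+1) \in rs.
    rewrite mem_nth // szr; have := ltn_ord a; lia.
  by rewrite mem_filter => /andP[].
have SL : forall a b, a < b -> b < M -> nth i ls a < nth i ls b.
  move=> a b ab bM; apply: (sorted_ltn_nth tr i sls) => //; rewrite inE szl; lia.
have SR : forall a b : 'I_k, M < a -> a < b ->
    nth i rs (a - M.+1) < nth i rs (b - M.+1).
  move=> a b aM ab; have := ltn_ord b => bk.
  apply: (sorted_ltn_nth tr i srs); rewrite ?inE ?szr; lia.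
pose f := [ffun a : 'I_k => if a < M then nth i ls a else if M < a then nth i rs (a - M.+1) else i].
have fM : f M = i by rewrite ffunE ltnn.
apply/existsP; exists f; apply/andP; split; apply/forallP => a; apply/forallP => b.
  apply/implyP => ab; rewrite !ffunE.
  case: (ltngtP a M) => aM; case: (ltngtP b M) => bM.
  - exact: SL.
  - by have /andP[H _] := FL a aM; have /andP[H' _] := FR b bM; apply: ltn_trans H H'.
  - by have /andP[H _] := FL a aM.
  - lia.
  - exact: SR.
  - lia.
  - lia.
  - by have /andP[H _] := FR b bM.
  - lia.
apply/implyP; rewrite hp => /andP[/eqP -> bM]; rewrite fM ffunE.
case: (ltngtP b M) => bM'.
- by have /andP[_ H] := FL b bM'.
- by have /andP[_ H] := FR b bM'.
- have E : b = M by apply: val_inj.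
  by rewrite E eqxx in bM.
Qed.

Theorem theorem2p2 (k : nat) (hk : 0 < k) (x : 'S_k) (n : nat) :
  #|[set pi : 'S_n | pop_avoids pi (max_first_pop x (Ordinal hk))]| =
  (if n < k then n`! else (k.-1)`! * (k.-1) ^ (n - k + 1)).
Proof.
set M := x (Ordinal hk).
rewrite -(@count_formula k M n hk (ltn_ord M)) -card_word.
apply: eq_card => pi; rewrite !inE /pop_avoids (contains_char (M := M)); last first.
  by move=> a b; rewrite p_eq.
rewrite Q_word negb_exists; apply: eq_forallb => i.
by rewrite negb_and /cnd -!ltnNge.
Qed.
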